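(* Let $X$ be a bounded subset of $\mathbb{R}^n$ and $\hat X$ a finite subset of $\mathbb{R}^n$. Let $v:X\to\mathbb{R}$ be Lipschitz continuous with constant $L_v$ with respect to the Euclidean norm, and let $a\geq L_v$. Let $\mathcal Z_{\hat X}$ be the complete semimodule of $\overline{\mathbb{R}}_{\max}^X$ generated by the functions $z_{\hat x}(x)=-a\|x-\hat x\|_1$ ($x\in X$), $\hat x\in\hat X$. Then \[ \|v-P^{-(\mathcal Z_{\hat X})}v\|_\infty\leq n(a+L_v)\rho_X(\hat X). \]
   Context: $\|x\|_1=\sum_i|x_i|$. $\rho_X(P)=\sup_{x\in X}\inf_{p\in P}\|x-p\|_2$. $P^{-(\mathcal Z_{\hat X})}v=\min\{g\in -\mathcal Z_{\hat X}: g\geq v\}$, explicitly $P^{-(\mathcal Z_{\hat X})}v(x)=\inf_{\hat x\in\hat X}\big(a\|x-\hat x\|_1+\sup_{y\in X}(-a\|y-\hat x\|_1+v(y))\big)$ for $x\in X$. $\|g\|_\infty=\sup_{x\in X}|g(x)|$. *)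

(* Defs.v *)
From HB Require Import structures.
From mathcomp Require Import all_boot all_order all_algebra.
From mathcomp Require Import all_classical all_reals.
From mathcomp Require Import ereal.
Set Implicit Arguments. Unset Strict Implicit. Unset Printing Implicit Defensive.
Import Order.TTheory GRing.Theory Num.Theory.
Local Open Scope classical_set_scope.
Local Open Scope ring_scope.

Definition l1norm (R : realType) (n : nat) (x : 'rV[R]_n) : R :=
  \sum_(i < n) `|x ord0 i|.

Definition l2norm (R : realType) (n : nat) (x : 'rV[R]_n) : R :=
  Num.sqrt (\sum_(i < n) (x ord0 i) ^+ 2).

Definition rhoX (R : realType) (n : nat) (X P : set 'rV[R]_n) : \bar R :=
  ereal_sup [set ereal_inf [set (l2norm (x - p))%:E | p in P] | x in X].

Definition PZ (R : realType) (n : nat) (a : R) (X Xh : set 'rV[R]_n)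
  (v : 'rV[R]_n -> R) (x : 'rV[R]_n) : \bar R :=
  ereal_inf [set ((a * l1norm (x - xh))%:E
     + ereal_sup [set (- (a * l1norm (y - xh)) + v y)%:E | y in X])%E | xh in Xh].

Definition supnormX (R : realType) (n : nat) (X : set 'rV[R]_n)
  (g : 'rV[R]_n -> \bar R) : \bar R :=
  ereal_sup [set `|g x|%E | x in X].

(* Main.v *)
Require Import Defs.
From HB Require Import structures.
From mathcomp Require Import all_boot all_order all_algebra.
From mathcomp Require Import all_classical all_reals.
From mathcomp Require Import ereal.
From mathcomp Require Import lra.
Import Order.TTheory GRing.Theory Num.Theory.
Local Open Scope classical_set_scope.
Local Open Scope ring_scope.

Section Helpers.
Variables (R : realType) (n : nat).
Implicit Types x y d : 'rV[R]_n.

Lemma l1_ge0 d : 0 <= l1norm d.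
Proof. by apply: sumr_ge0 => i _. Qed.

Lemma l1_tri x y : l1norm (x + y) <= l1norm x + l1norm y.
Proof.
rewrite /l1norm -big_split /=; apply: ler_sum => i _.
by rewrite mxE ler_normD.
Qed.

Lemma l1_sym x y : l1norm (x - y) = l1norm (y - x).
Proof.
rewrite /l1norm; apply: eq_bigr => i _.
by rewrite !mxE distrC.
Qed.

Lemma sum_sq_le (F : 'I_n -> R) : (forall i, 0 <= F i) ->
  \sum_i F i ^+ 2 <= (\sum_i F i) ^+ 2.
Proof.
move=> F0; rewrite expr2 mulr_suml; apply: ler_sum => i _.
rewrite expr2; apply: ler_wpM2l => //.
rewrite (bigD1 i) //= lerDl; exact: sumr_ge0.
Qed.

Lemma l2_le_l1 d : l2norm d <= l1norm d.
Proof.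
rewrite /l2norm -(ger0_norm (l1_ge0 d)) -sqrtr_sqr ler_sqrt ?exprn_ge0 ?l1_ge0 //.
rewrite /l1norm; apply: le_trans (sum_sq_le (fun i => `|d ord0 i|) (fun i => normr_ge0 _)).
apply: ler_sum => i _; by rewrite real_normK ?num_real.
Qed.

Lemma l1_le_nl2 d : l1norm d <= n%:R * l2norm d.
Proof.
have -> : n%:R * l2norm d = \sum_(i < n) l2norm d by rewrite sumr_const card_ord mulr_natl.
rewrite /l1norm.
apply: ler_sum => i _.
rewrite /l2norm -sqrtr_sqr ler_sqrt; last by apply: sumr_ge0 => j _; apply: sqr_ge0.
by rewrite (bigD1 i) //= lerDl; apply: sumr_ge0 => j _; apply: sqr_ge0.
Qed.

End Helpers.
Arguments l1_ge0 {R n}. Arguments l1_tri {R n}. Arguments l1_sym {R n}. Arguments l2_le_l1 {R n}. Arguments l1_le_nl2 {R n}. Arguments sum_sq_le {R n}.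

Theorem lemma5p10 (R : realType) (n : nat) (X Xh : set 'rV[R]_n)
  (v : 'rV[R]_n -> R) (Lv a : R) :
  (exists M : R, forall x, X x -> l2norm x <= M) ->
  finite_set Xh -> Xh !=set0 ->
  0 <= Lv ->
  (forall x y, X x -> X y -> `|v x - v y| <= Lv * l2norm (x - y)) ->
  Lv <= a ->
  (supnormX X (fun x => ((v x)%:E - PZ a X Xh v x)%E)
    <= ((n%:R * (a + Lv))%:E * rhoX X Xh)%E)%E.
Proof.
move=> _ _ [xh0 Xh0] Lv0 Lip Lva.
set c := n%:R * (a + Lv).
have c0 : 0 <= c by rewrite /c mulr_ge0 // addr_ge0 // (le_trans Lv0).
apply: ge_ereal_sup => _ [x Xx <-].
set S := fun xh => ereal_sup [set (- (a * l1norm (y - xh)) + v y)%:E | y in X].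
have Hlow : forall xh, ((- (a * l1norm (x - xh)) + v x)%:E <= S xh)%E.
  by move=> xh; apply: ereal_sup_ubound; exists x.
have Hup : forall xh, (S xh <= (v x + Lv * l1norm (x - xh))%:E)%E.
  move=> xh; apply: ge_ereal_sup => _ [y Xy <-]; rewrite lee_fin.
  have h1 : v y - v x <= Lv * l2norm (y - x).
    by apply: le_trans (Lip _ _ Xy Xx); apply: ler_norm.
  have h2 : Lv * l2norm (y - x) <= Lv * l1norm (y - x) by apply: ler_wpM2l => //; apply: l2_le_l1.
  have h3 : Lv * l1norm (y - x) <= Lv * l1norm (y - xh) + Lv * l1norm (x - xh).
    rewrite -mulrDr; apply: ler_wpM2l => //.
    have -> : y - x = (y - xh) + (xh - x) by rewrite addrA subrK.
    by rewrite [l1norm (x - xh)]l1_sym; apply: l1_tri.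
  have h4 : Lv * l1norm (y - xh) <= a * l1norm (y - xh) by apply: ler_wpM2r => //; apply: l1_ge0.
  lra.
have Plow : ((v x)%:E <= PZ a X Xh v x)%E.
  apply: le_ereal_inf_tmp => _ [xh Xxh <-].
  apply: le_trans (leeD2l (a * l1norm (x - xh))%:E (Hlow xh)).
  by rewrite -EFinD lee_fin; lra.
have Pup : forall xh, Xh xh ->
    (PZ a X Xh v x <= (a * l1norm (x - xh) + (v x + Lv * l1norm (x - xh)))%:E)%E.
  move=> xh Xxh; apply: (@le_trans _ _ ((a * l1norm (x - xh))%:E + S xh)%E).
    by apply: ereal_inf_lbound; exists xh.
  by rewrite EFinD; apply: leeD2l; apply: Hup.
have Pup0 := Pup _ Xh0.
move: Plow Pup Pup0; case: (PZ a X Xh v x) => [p| |] //= Plow Pup Pup0.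
rewrite lee_fin in Plow.
have Pup' : forall xh, Xh xh -> p - v x <= c * l2norm (x - xh).
  move=> xh Xxh; have := Pup _ Xxh; rewrite lee_fin => h.
  have := l1_le_nl2 (x - xh) => h2.
  have h3 : (a + Lv) * l1norm (x - xh) <= (a + Lv) * (n%:R * l2norm (x - xh)).
    by apply: ler_wpM2l => //; rewrite addr_ge0 // (le_trans Lv0).
  rewrite /c -mulrA; lra.
rewrite distrC ger0_norm ?subr_ge0 //.
apply: (@le_trans _ _ (c%:E * ereal_inf [set (l2norm (x - q))%:E | q in Xh])%E).
  have [cE|cpos] := eqVneq c 0.
    by rewrite cE mul0e lee_fin; have := Pup' _ Xh0; rewrite cE mul0r.
  have cgt0 : 0 < c by rewrite lt_neqAle eq_sym cpos c0.
  have -> : p - v x = c * ((p - v x) / c) by rewrite mulrC divfK.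
  rewrite EFinM; apply: lee_wpmul2l; first by rewrite lee_fin.
  apply: le_ereal_inf_tmp => _ [q Xq <-]; rewrite lee_fin ler_pdivrMr // mulrC.
  exact: Pup'.
apply: lee_wpmul2l; first by rewrite lee_fin.
by apply: ereal_sup_ubound; exists x.
Qed.
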